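(* Let $F$ be a field, $P\in F[t]$ a monic irreducible polynomial of degree $d\ge1$, and $G_1,G_2,G_3\in F[t]$ polynomials not divisible by $P$. Then $$\{x_P(G_1,G_2)\}_2-\{x_P(G_1G_3,G_2)\}_2-\{x_P(G_1,G_3)\}_2+\{x_P(G_1G_2,G_3)\}_2\in B_{d-1}(F(t)).$$
   Context: For a field $K$, $K^*$ means $K^*\otimes\mathbb{Q}$, exterior powers over $\mathbb{Q}$. $B_2(K)=\mathbb{Q}[\mathbb{P}^1(K)]/R_2(K)$, with basis symbols $\{x\}_2$ ($x\in\mathbb{P}^1(K)$) modulo the span of $\{0\}_2,\{\infty\}_2$ and $\sum_{i=1}^5(-1)^i\{r(x_1,\dots,\hat x_i,\dots,x_5)\}_2$ (pairwise distinct $x_j$, $r(a,b,c,d)=\frac{(a-b)(c-d)}{(c-b)(a-d)}$); $\delta_2(\{x\}_2)=x\wedge(1-x)\in\bigwedge^2K^*$. $V_e\subset F(t)^*\otimes\mathbb{Q}$ is the span of nonzero polynomials of degree $\le e$; $B_e(F(t))=\{y\in B_2(F(t)):\delta_2(y)\in\bigwedge^2V_e\}$. For a polynomial $G$ not divisible by $P$, let $\overline G$ be its remainder modulo $P$ (degree $<d$). For $G,H$ not divisible by $P$, $x_P(G,H):=\overline G\,\overline H/\overline{GH}\in F(t)^*$. *)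

(* Defs.v *)
From HB Require Import structures.
From mathcomp Require Import all_boot all_order all_algebra.
Set Implicit Arguments. Unset Strict Implicit. Unset Printing Implicit Defensive.
Import Order.TTheory GRing.Theory Num.Theory.
Local Open Scope ring_scope.

(* Formal finite Q-linear combinations  sum_i q_i [x_i]  of symbols from X,
   i.e. elements of Q[X], represented by lists; two lists represent the
   same element iff they have the same coefficient function [fcoef]. *)
Definition fsum (X : Type) := seq (rat * X).

Definition fcoef (X : eqType) (s : fsum X) (x : X) : rat :=
  \sum_(p <- s) (if p.2 == x then p.1 else 0).

Definition in_span (X : eqType) (gen : fsum X -> Prop) (v : fsum X) : Prop :=
  exists L : seq (rat * fsum X),
    (forall l, l \in L -> gen l.2) /\
    forall x, fcoef v x = \sum_(l <- L) l.1 * fcoef l.2 x.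

Section Bloch.
Variable F : fieldType.

Definition Ft := {fraction {poly F}}.
Definition pfrac (p : {poly F}) : Ft := FracField.tofrac p.

(* Q-vector space  /\^2 (K^x (x) Q)  presented as Q[K^x x K^x] modulo the
   relations (a a') /\ b = a /\ b + a' /\ b, a /\ (b b') = a /\ b + a /\ b',
   a /\ a = 0 (a, a', b, b' in K^x ).  A symbol (a, b) stands for a /\ b. *)
Definition wedge_rel (r : fsum (Ft * Ft)) : Prop :=
  (exists a a' b : Ft, [/\ a != 0, a' != 0, b != 0 &
      r = [:: (1, (a * a', b)); (-1, (a, b)); (-1, (a', b))]]) \/
  (exists a b b' : Ft, [/\ a != 0, b != 0, b' != 0 &
      r = [:: (1, (a, b * b')); (-1, (a, b)); (-1, (a, b'))]]) \/
  (exists a : Ft, a != 0 /\ r = [:: (1, (a, a))]).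

Definition wedgeV_gen (e : nat) (r : fsum (Ft * Ft)) : Prop :=
  exists p q : {poly F}, [/\ p != 0, q != 0, (size p <= e.+1)%N,
      (size q <= e.+1)%N & r = [:: (1, (pfrac p, pfrac q))]].

Definition in_wedgeV (e : nat) (w : fsum (Ft * Ft)) : Prop :=
  in_span (fun r => wedge_rel r \/ wedgeV_gen e r) w.

(* P^1(K) = option K, None = infinity.
   delta_2 {x}_2 = x /\ (1 - x), and 0 for x in {0, 1, infinity}. *)
Definition delta2_sym (c : rat) (x : option Ft) : fsum (Ft * Ft) :=
  match x with
  | Some y => if (y == 0) || (y == 1) then [::] else [:: (c, (y, 1 - y))]
  | None => [::]
  end.

Definition delta2 (xi : fsum (option Ft)) : fsum (Ft * Ft) :=
  flatten [seq delta2_sym p.1 p.2 | p <- xi].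

(* B_e(F(t)) = { y in B_2(F(t)) : delta_2 y in /\^2 V_e }.  Since delta_2 is
   well defined on B_2 = Q[P^1(K)]/R_2(K), the class of xi lies in B_e iff
   delta_2 xi lies in /\^2 V_e. *)
Definition in_Be (e : nat) (xi : fsum (option Ft)) : Prop :=
  in_wedgeV e (delta2 xi).

Definition xP (P G H : {poly F}) : Ft :=
  pfrac (G %% P) * pfrac (H %% P) / pfrac ((G * H) %% P).

End Bloch.

(* Main.v *)
Require Import Defs.
From HB Require Import structures.
From mathcomp Require Import all_boot all_order all_algebra.
From mathcomp Require Import ring zify.
Import Order.TTheory GRing.Theory Num.Theory.
Local Open Scope ring_scope.

Section Span.
Variable X : eqType.
Variable gen : fsum X -> Prop.
Local Notation S := (in_span gen).

Definition scale (c : rat) (v : fsum X) : fsum X := [seq (c * p.1, p.2) | p <- v].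

Lemma fcoef_nil (x : X) : @fcoef X [::] x = 0.
Proof. by rewrite /fcoef big_nil. Qed.
Lemma fcoef_cons (p : rat * X) (s : fsum X) (x : X) : fcoef (p :: s) x = (if p.2 == x then p.1 else 0) + fcoef s x.
Proof. by rewrite /fcoef big_cons. Qed.
Lemma fcoef_cat (s t : fsum X) (x : X) : fcoef (s ++ t) x = fcoef s x + fcoef t x.
Proof. by rewrite /fcoef big_cat. Qed.
Lemma fcoef_scale c (s : fsum X) (x : X) : fcoef (scale c s) x = c * fcoef s x.
Proof.
elim: s => [|p s IH]; first by rewrite /= !fcoef_nil mulr0.
rewrite /= !fcoef_cons IH mulrDr; congr (_ + _); by case: ifP; rewrite ?mulr0.
Qed.

Lemma S_ext (v w : fsum X) : (forall x, fcoef v x = fcoef w x) -> S v -> S w.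
Proof. move=> E [L [HL HE]]; exists L; split=> // x; by rewrite -E. Qed.
Lemma S_nil : S [::].
Proof. exists [::]; split=> // x; by rewrite fcoef_nil big_nil. Qed.
Lemma S_gen r : gen r -> S r.
Proof.
move=> g; exists [:: (1, r)]; split; first by move=> l; rewrite inE => /eqP ->.
move=> x; by rewrite big_cons big_nil mul1r addr0.
Qed.
Lemma S_cat (v w : fsum X) : S v -> S w -> S (v ++ w).
Proof.
move=> [L1 [H1 E1]] [L2 [H2 E2]]; exists (L1 ++ L2); split.
  by move=> l; rewrite mem_cat => /orP [] ?; [apply: H1|apply: H2].
by move=> x; rewrite fcoef_cat big_cat E1 E2.
Qed.
Lemma S_scale c (v : fsum X) : S v -> S (scale c v).
Proof.
move=> [L [H E]]; exists [seq (c * l.1, l.2) | l <- L]; split.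
  move=> l /mapP [l0 Hl0 ->]; exact: (H l0 Hl0).
move=> x; rewrite fcoef_scale E big_map mulr_sumr.
by apply: eq_bigr => l _; rewrite mulrA.
Qed.
End Span.
Arguments S_ext {X gen v w}.
Arguments S_nil {X gen}.
Arguments S_gen {X gen r}.
Arguments S_cat {X gen v w}.
Arguments S_scale {X gen} c {v}.
Arguments scale {X} c v.

Ltac fcsimp := rewrite ?fcoef_cat ?fcoef_scale ?fcoef_cons ?fcoef_nil /=.
Lemma if_t (A : Type) (a b : A) : (if true then a else b) = a. Proof. by []. Qed.
Lemma if_f (A : Type) (a b : A) : (if false then a else b) = b. Proof. by []. Qed.
Ltac ifcases := repeat match goal with |- context [if ?b then _ else _] =>
  lazymatch b with true => fail | false => fail | _ => case: b; rewrite ?if_t ?if_f end end.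

Section Main.
Variable F : fieldType.
Variable e : nat.
Local Notation S := (in_span (fun r => wedge_rel r \/ @wedgeV_gen F e r)).
Local Notation pf := (@pfrac F).

Lemma S_rel r : wedge_rel r -> S r.
Proof. by move=> g; apply: S_gen; left. Qed.
Lemma S_V r : wedgeV_gen e r -> S r.
Proof. by move=> g; apply: S_gen; right. Qed.

Lemma R1 c {a a' b : Ft F} : a != 0 -> a' != 0 -> b != 0 ->
  S [:: (c, (a * a', b)); (-c, (a, b)); (-c, (a', b))].
Proof.
move=> ha ha' hb.
have g : wedge_rel [:: (1, (a * a', b)); (-1, (a, b)); (-1, (a', b))].
  by left; exists a, a', b.
have := S_scale c (S_rel _ g).
by rewrite /scale /= mulr1 mulrN1.
Qed.

Lemma R2 c {a b b' : Ft F} : a != 0 -> b != 0 -> b' != 0 ->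
  S [:: (c, (a, b * b')); (-c, (a, b)); (-c, (a, b'))].
Proof.
move=> ha hb hb'.
have g : wedge_rel [:: (1, (a, b * b')); (-1, (a, b)); (-1, (a, b'))].
  by right; left; exists a, b, b'.
have := S_scale c (S_rel _ g).
by rewrite /scale /= mulr1 mulrN1.
Qed.

Lemma one_l c {z : Ft F} : z != 0 -> S [:: (c, (1, z))].
Proof.
move=> hz; have := R1 (-c) (oner_neq0 _) (oner_neq0 _) hz.
rewrite mulr1 opprK; apply: S_ext => x; fcsimp; ifcases; ring.
Qed.

Definition Good (y z : Ft F) := forall c, S [:: (c, (y, z))].

Lemma Good_mull {y1 y2 z : Ft F} : y1 != 0 -> y2 != 0 -> z != 0 -> Good y1 z -> Good y2 z ->
  Good (y1 * y2) z.
Proof.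
move=> h1 h2 hz g1 g2 c.
have := S_cat (S_cat (R1 c h1 h2 hz) (g1 c)) (g2 c).
apply: S_ext => x; fcsimp; ifcases; ring.
Qed.

Lemma Good_mulr {y z1 z2 : Ft F} : y != 0 -> z1 != 0 -> z2 != 0 -> Good y z1 -> Good y z2 ->
  Good y (z1 * z2).
Proof.
move=> h h1 h2 g1 g2 c.
have := S_cat (S_cat (R2 c h h1 h2) (g1 c)) (g2 c).
apply: S_ext => x; fcsimp; ifcases; ring.
Qed.

Lemma Good_invl {y z : Ft F} : y != 0 -> z != 0 -> Good y z -> Good y^-1 z.
Proof.
move=> h hz g c.
have h' : y^-1 != 0 := invr_neq0 h.
have := S_cat (S_cat (R1 (-c) h h' hz) (g (-c))) (one_l c hz).
rewrite (mulfV h); apply: S_ext => x; fcsimp; ifcases; ring.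
Qed.

Lemma one_r c {y : Ft F} : y != 0 -> S [:: (c, (y, 1))].
Proof.
move=> hy; have := R2 (-c) hy (oner_neq0 _) (oner_neq0 _).
rewrite mulr1 opprK; apply: S_ext => x; fcsimp; ifcases; ring.
Qed.

Lemma Good_invr {y z : Ft F} : y != 0 -> z != 0 -> Good y z -> Good y z^-1.
Proof.
move=> h hz g c.
have h' : z^-1 != 0 := invr_neq0 hz.
have := S_cat (S_cat (R2 (-c) h hz h') (g (-c))) (one_r c h).
rewrite (mulfV hz); apply: S_ext => x; fcsimp; ifcases; ring.
Qed.

Lemma Good_atom {p q : {poly F}} : p != 0 -> q != 0 -> (size p <= e.+1)%N -> (size q <= e.+1)%N ->
  Good (pf p) (pf q).
Proof.
move=> hp hq sp sq c.
have g : wedgeV_gen e [:: (1, (pf p, pf q))] by exists p, q.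
have := S_scale c (S_V _ g).
by rewrite /scale /= mulr1.
Qed.

End Main.


Lemma idE (K : fieldType) (a b c r12 r13 r : K) : r != 0 -> r12 != 0 -> r13 != 0 ->
  r13 * b / r * (a * c / r13) = a * b / r12 * (r12 * c / r).
Proof.
move=> h h12 h13.
by field; rewrite h h12 h13.
Qed.

Section Main2.
Variable F : fieldType.
Variable P : {poly F}.
Hypothesis Pm : P \is monic.
Hypothesis Pi : irreducible_poly P.
Hypothesis Pd : (1 <= (size P).-1)%N.
Local Notation e := ((size P).-1).-1.
Local Notation S := (in_span (fun r => wedge_rel r \/ @wedgeV_gen F e r)).
Local Notation pf := (@pfrac F).

Lemma ndvd_mul {G H : {poly F}} : ~~ (P %| G) -> ~~ (P %| H) -> ~~ (P %| G * H).
Proof.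
move=> hG hH; rewrite Gauss_dvdpl; first exact: hG.
by rewrite irreducible_poly_coprime.
Qed.

Lemma pfM (p q : {poly F}) : pf (p * q) = pf p * pf q.
Proof. exact: rmorphM. Qed.
Lemma pfD (p q : {poly F}) : pf (p + q) = pf p + pf q.
Proof. exact: rmorphD. Qed.
Lemma pfN (p : {poly F}) : pf (- p) = - pf p.
Proof. exact: rmorphN. Qed.
Lemma pf0 : pf 0 = 0.
Proof. exact: rmorph0. Qed.

Lemma pf_neq0 {p : {poly F}} : p != 0 -> pf p != 0.
Proof. by move=> h; rewrite /pfrac tofrac_eq0. Qed.

Lemma mod_neq0 {G : {poly F}} : ~~ (P %| G) -> G %% P != 0.
Proof. move=> h; apply/eqP => /modp_eq0P h'; move/negP: h; apply; exact: h'. Qed.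

Lemma P_neq0 : P != 0. Proof. exact: monic_neq0. Qed.

Lemma size_mod (G : {poly F}) : (size (G %% P)%R <= e.+1)%N.
Proof.
have h : (size (G %% P)%R < size P)%N by rewrite ltn_modp P_neq0.
move: h Pd; lia.
Qed.

Lemma T s {G H : {poly F}} : ~~ (P %| G) -> ~~ (P %| H) ->
  S (delta2_sym s (Some (xP P G H)) ++ [:: (-s, (xP P G H, pf P))]).
Proof.
move=> hG hH.
have hGH := ndvd_mul hG hH.
set x := xP P G H.
set a := G %% P; set b := H %% P; set c := (G * H) %% P.
have hc : c = (a * b) %% P.
  rewrite /a /b /c; have h1 := modp_mul (G %% P) H P; have h2 := modp_mul H G P.
  by rewrite h1 mulrC -h2 mulrC.
have na : a != 0 := mod_neq0 hG.
have nb : b != 0 := mod_neq0 hH.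
have nc : c != 0 := mod_neq0 hGH.
set q := (a * b) %/ P.
have hab : a * b = q * P + c by rewrite hc; apply: divp_eq.
have pa := pf_neq0 na; have pb := pf_neq0 nb; have pc := pf_neq0 nc.
have pP := pf_neq0 P_neq0.
set u := pf (- q) / pf c.
have e1 : 1 - x = u * pf P.
  rewrite /x /xP /u -/a -/b -/c.
  have : pf (a * b) = pf (q * P + c) by rewrite hab.
  rewrite !pfM pfD pfM pfN => ->.
  by rewrite mulrDl (mulfV pc) opprD addrCA subrr addr0 !mulNr mulrAC.
have hx : x != 0.
  exact: (mulf_neq0 (mulf_neq0 pa pb) (invr_neq0 pc)).
rewrite /delta2_sym (negbTE hx) /=.
case: eqP => [x1|x1].
  rewrite x1; exact: one_l.
have hu : u != 0.
  apply/eqP => u0; apply: x1; apply/eqP.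
  by rewrite eq_sym -subr_eq0 e1 u0 mul0r.
have hq : - q != 0.
  apply/eqP => q0; move/eqP: hu; apply; by rewrite /u q0 pf0 mul0r.
have sa : (size a <= e.+1)%N := size_mod G.
have sb : (size b <= e.+1)%N := size_mod H.
have sc : (size c <= e.+1)%N := size_mod (G * H)%R.
have sq : (size (- q)%R <= e.+1)%N.
  rewrite size_polyN /q size_divp; last exact: P_neq0.
  have := size_polyMleq a b; move: sa sb Pd.
  move: (size (a * b)%R) (size a) (size b) (size P) => n1 n2 n3 [|[|m]] //= h2 h3 _ h1.
  rewrite leq_subLR; apply: (leq_trans h1); apply: (leq_trans (leq_pred _)).
  exact: leq_add.
have pci : (pf c)^-1 != 0 := invr_neq0 pc.
have gu : forall p : {poly F}, p != 0 -> (size p <= e.+1)%N -> Good F e (pf p) u.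
  move=> p np sp.
  apply: (Good_mulr _ _ (pf_neq0 np) (pf_neq0 hq) pci).
    exact: Good_atom.
  apply: (Good_invr _ _ (pf_neq0 np) pc); exact: Good_atom.
have gx : Good F e x u.
  apply: (Good_mull _ _ (mulf_neq0 pa pb) pci hu).
    apply: (Good_mull _ _ pa pb hu); [exact: gu | exact: gu].
  apply: (Good_invl _ _ pc hu); exact: gu.
have := S_cat (R2 _ _ s hx hu pP) (gx s).
rewrite e1; apply: S_ext => y; fcsimp; ifcases; ring.
Qed.

Lemma Zlem {G1 G2 G3 : {poly F}} : ~~ (P %| G1) -> ~~ (P %| G2) -> ~~ (P %| G3) ->
  S [:: (1, (xP P G1 G2, pf P)); (-1, (xP P (G1 * G3) G2, pf P));
        (-1, (xP P G1 G3, pf P)); (1, (xP P (G1 * G2) G3, pf P))].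
Proof.
move=> h1 h2 h3.
have h12 := ndvd_mul h1 h2; have h13 := ndvd_mul h1 h3.
have h123 := ndvd_mul h12 h3; have h132 := ndvd_mul h13 h2.
have p1 := pf_neq0 (mod_neq0 h1); have p2 := pf_neq0 (mod_neq0 h2).
have p3 := pf_neq0 (mod_neq0 h3); have p12 := pf_neq0 (mod_neq0 h12).
have p13 := pf_neq0 (mod_neq0 h13); have p123 := pf_neq0 (mod_neq0 h123).
have p132 := pf_neq0 (mod_neq0 h132).
have pP := pf_neq0 P_neq0.
have nx : forall G H, ~~ (P %| G) -> ~~ (P %| H) -> xP P G H != 0.
  move=> G H hG hH; rewrite /xP.
  exact: (mulf_neq0 (mulf_neq0 (pf_neq0 (mod_neq0 hG)) (pf_neq0 (mod_neq0 hH)))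
           (invr_neq0 (pf_neq0 (mod_neq0 (ndvd_mul hG hH))))).
have E : xP P (G1 * G3) G2 * xP P G1 G3 = xP P G1 G2 * xP P (G1 * G2) G3.
  rewrite /xP (mulrAC G1 G3 G2).
  exact: (idE _ _ _ _ _ _ _ p123 p12 p13).
have := S_cat (R1 _ e 1 (nx _ _ h1 h2) (nx _ _ h12 h3) pP)
              (R1 _ e (-1) (nx _ _ h13 h2) (nx _ _ h1 h3) pP).
rewrite E => HH; have := S_scale (-1) HH.
apply: S_ext => y; fcsimp; ifcases; ring.
Qed.

Lemma assemble (D1 D2 D3 D4 : fsum (Ft F * Ft F)) x1 x2 x3 x4 (z : Ft F) :
  S (D1 ++ [:: (-1, (x1, z))]) -> S (D2 ++ [:: (- -1, (x2, z))]) ->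
  S (D3 ++ [:: (- -1, (x3, z))]) -> S (D4 ++ [:: (-1, (x4, z))]) ->
  S [:: (1, (x1, z)); (-1, (x2, z)); (-1, (x3, z)); (1, (x4, z))] ->
  S (D1 ++ (D2 ++ (D3 ++ (D4 ++ [::])))).
Proof.
move=> H1 H2 H3 H4 H5.
have := S_cat H1 (S_cat H2 (S_cat H3 (S_cat H4 H5))).
apply: S_ext => y; fcsimp.
ifcases; ring.
Qed.

Lemma main_sec (G1 G2 G3 : {poly F}) :
  ~~ (P %| G1) -> ~~ (P %| G2) -> ~~ (P %| G3) ->
  in_Be ((size P).-1).-1
    [:: (1, Some (xP P G1 G2)); (-1, Some (xP P (G1 * G3) G2));
        (-1, Some (xP P G1 G3)); (1, Some (xP P (G1 * G2) G3))].
Proof.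
move=> h1 h2 h3.
rewrite /in_Be /in_wedgeV.
have -> : delta2 [:: (1, Some (xP P G1 G2)); (-1, Some (xP P (G1 * G3) G2));
        (-1, Some (xP P G1 G3)); (1, Some (xP P (G1 * G2) G3))] =
  delta2_sym 1 (Some (xP P G1 G2)) ++ (delta2_sym (-1) (Some (xP P (G1 * G3) G2)) ++
  (delta2_sym (-1) (Some (xP P G1 G3)) ++ (delta2_sym 1 (Some (xP P (G1 * G2) G3)) ++ [::]))).
  reflexivity.
have h13 := ndvd_mul h1 h3; have h12 := ndvd_mul h1 h2.
eapply assemble.
- exact: (T 1 h1 h2).
- exact: (T (-1) h13 h2).
- exact: (T (-1) h1 h3).
- exact: (T 1 h12 h3).
- exact: (Zlem h1 h2 h3).
Qed.

End Main2.

Theorem lemma2 (F : fieldType) (P G1 G2 G3 : {poly F}) :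
  P \is monic -> irreducible_poly P -> (1 <= (size P).-1)%N ->
  ~~ (P %| G1) -> ~~ (P %| G2) -> ~~ (P %| G3) ->
  in_Be ((size P).-1).-1
    [:: (1, Some (xP P G1 G2)); (-1, Some (xP P (G1 * G3) G2));
        (-1, Some (xP P G1 G3)); (1, Some (xP P (G1 * G2) G3))].
Proof.
move=> Pm Pi Pd h1 h2 h3.
apply: main_sec; assumption.
Qed.
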